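(* Let $\Psi$ be a well-formed declarative context (containing only universal type variables and term-variable typings) and $A,B$ types with $\Psi\vdash A$ and $\Psi\vdash B$. If $\Psi\vdash A<:B\dashv\Delta$ for some context $\Delta$ (algorithmic subtyping), then $\Psi\vdash A\le B$ (declarative subtyping).
   Context: Declarative types $A ::= 1\mid\alpha\mid\forall\alpha.A\mid A\to B$; declarative contexts $\Psi ::= \cdot\mid\Psi,\alpha\mid\Psi,x:A$. Declarative subtyping $\Psi\vdash A\le B$: least relation with $\alpha\in\Psi\Rightarrow\Psi\vdash\alpha\le\alpha$; $\Psi\vdash1\le1$; ($\Psi\vdash B_1\le A_1$, $\Psi\vdash A_2\le B_2$) $\Rightarrow\Psi\vdash A_1\to A_2\le B_1\to B_2$; ($\Psi\vdash\tau$ for a quantifier-free $\tau$, $\Psi\vdash[\tau/\alpha]A\le B$) $\Rightarrow\Psi\vdash\forall\alpha.A\le B$; $\Psi,\beta\vdash A\le B\Rightarrow\Psi\vdash A\le\forall\beta.B$. Algorithmic types add existential variables $\hat\alpha$: $A ::= 1\mid\alpha\mid\hat\alpha\mid\forall\alpha.A\mid A\to B$; monotypes $\tau ::= 1\mid\alpha\mid\hat\alpha\mid\tau\to\tau'$. Algorithmic contexts $\Gamma ::= \cdot\mid\Gamma,\alpha\mid\Gamma,x:A\mid\Gamma,\hat\alpha\mid\Gamma,\hat\alpha=\tau\mid\Gamma,\blacktriangleright_{\hat\alpha}$ (unsolved evar, solved evar, marker), each variable declared at most once, each type/solution well-formed under the prefix to its left. $\Gamma\vdash A$: $\alpha$ declared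 in $\Gamma$, $\hat\alpha$ declared (solved or not) in $\Gamma$, arrows componentwise, $\Gamma\vdash\forall\alpha.A$ iff $\Gamma,\alpha\vdash A$. $\Gamma[\Theta]$ denotes a context with $\Theta$ somewhere inside; $\Gamma[\hat\alpha][\hat\beta]$ means $\hat\alpha$ is declared to the left of $\hat\beta$. $[\Gamma]A$ replaces each solved $\hat\alpha$ (with $\hat\alpha=\tau\in\Gamma$) by $[\Gamma]\tau$, recursively. Variables introduced in premises ($\hat\alpha,\hat\alpha_1,\hat\alpha_2,\hat\beta,\beta$) are fresh. Algorithmic subtyping $\Gamma\vdash A<:B\dashv\Delta$: $\Gamma[\alpha]\vdash\alpha<:\alpha\dashv\Gamma[\alpha]$; $\Gamma\vdash1<:1\dashv\Gamma$; $\Gamma[\hat\alpha]\vdash\hat\alpha<:\hat\alpha\dashv\Gamma[\hat\alpha]$; ($\Gamma\vdash B_1<:A_1\dashv\Theta$, $\Theta\vdash[\Theta]A_2<:[\Theta]B_2\dashv\Delta$) $\Rightarrow\Gamma\vdash A_1\to A_2<:B_1\to B_2\dashv\Delta$; $\Gamma,\blacktriangleright_{\hat\alpha},\hat\alpha\vdash[\hat\alpha/\alpha]A<:B\dashv\Delta,\blacktriangleright_{\hat\alpha},\Theta\Rightarrow\Gamma\vdash\forall\alpha.A<:B\dashv\Delta$; $\Gamma,\alpha\vdash A<:B\dashv\Delta,\alpha,\Theta\Rightarrow\Gamma\vdash A<:\forall\alpha.B\dashv\Delta$; ($\hat\alpha\notin FV(A)$, $\Gamma[\hat\alpha]\vdash\hat\alpha:\leqq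 A\dashv\Delta$) $\Rightarrow\Gamma[\hat\alpha]\vdash\hat\alpha<:A\dashv\Delta$; ($\hat\alpha\notin FV(A)$, $\Gamma[\hat\alpha]\vdash A\leqq:\hat\alpha\dashv\Delta$) $\Rightarrow\Gamma[\hat\alpha]\vdash A<:\hat\alpha\dashv\Delta$. Instantiation $\Gamma\vdash\hat\alpha:\leqq A\dashv\Delta$: ($\Gamma\vdash\tau$ monotype) $\Rightarrow\Gamma,\hat\alpha,\Gamma'\vdash\hat\alpha:\leqq\tau\dashv\Gamma,\hat\alpha=\tau,\Gamma'$; $\Gamma[\hat\alpha][\hat\beta]\vdash\hat\alpha:\leqq\hat\beta\dashv\Gamma[\hat\alpha][\hat\beta=\hat\alpha]$; ($\Gamma[\hat\alpha_2,\hat\alpha_1,\hat\alpha=\hat\alpha_1\to\hat\alpha_2]\vdash A_1\leqq:\hat\alpha_1\dashv\Theta$, $\Theta\vdash\hat\alpha_2:\leqq[\Theta]A_2\dashv\Delta$) $\Rightarrow\Gamma[\hat\alpha]\vdash\hat\alpha:\leqq A_1\to A_2\dashv\Delta$; $\Gamma[\hat\alpha],\beta\vdash\hat\alpha:\leqq B\dashv\Delta,\beta,\Delta'\Rightarrow\Gamma[\hat\alpha]\vdash\hat\alpha:\leqq\forall\beta.B\dashv\Delta$. Instantiation $\Gamma\vdash A\leqq:\hat\alpha\dashv\Delta$: ($\Gamma\vdash\tau$) $\Rightarrow\Gamma,\hat\alpha,\Gamma'\vdash\tau\leqq:\hat\alpha\dashv\Gamma,\hat\alpha=\tau,\Gamma'$;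 $\Gamma[\hat\alpha][\hat\beta]\vdash\hat\beta\leqq:\hat\alpha\dashv\Gamma[\hat\alpha][\hat\beta=\hat\alpha]$; ($\Gamma[\hat\alpha_2,\hat\alpha_1,\hat\alpha=\hat\alpha_1\to\hat\alpha_2]\vdash\hat\alpha_1:\leqq A_1\dashv\Theta$, $\Theta\vdash[\Theta]A_2\leqq:\hat\alpha_2\dashv\Delta$) $\Rightarrow\Gamma[\hat\alpha]\vdash A_1\to A_2\leqq:\hat\alpha\dashv\Delta$; $\Gamma[\hat\alpha],\blacktriangleright_{\hat\beta},\hat\beta\vdash[\hat\beta/\beta]B\leqq:\hat\alpha\dashv\Delta,\blacktriangleright_{\hat\beta},\Delta'\Rightarrow\Gamma[\hat\alpha]\vdash\forall\beta.B\leqq:\hat\alpha\dashv\Delta$. *)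

(* Defs.v *)
(* Locally nameless encoding of the Dunfield-Krishnaswami
   declarative and algorithmic subtyping systems. *)
From Stdlib Require Import List Arith.
Import ListNotations.

(* Bound (universal) variables are de Bruijn indices [TBVar];
   free universal variables [TFVar a] and existential variables [TEx a]
   are named by natural numbers. [TAll A] binds index 0 in [A]. *)
Inductive typ : Type :=
| TUnit : typ
| TBVar : nat -> typ
| TFVar : nat -> typ
| TEx   : nat -> typ
| TAll  : typ -> typ
| TArr  : typ -> typ -> typ.

(* opening: [open A u] = [u/alpha]A where alpha is the variable bound by
   the outermost forall whose body is A (u is locally closed). *)
Fixpoint open_rec (k : nat) (u : typ) (A : typ) : typ :=
  match A with
  | TBVar n => if Nat.eqb n k then u else TBVar n
  | TAll B => TAll (open_rec (S k) u B)
  | TArr B C => TArr (open_rec k u B) (open_rec k u C)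
  | _ => A
  end.
Definition open (A u : typ) : typ := open_rec 0 u A.

Inductive mono : typ -> Prop :=
| mono_unit : mono TUnit
| mono_var  : forall a, mono (TFVar a)
| mono_ex   : forall a, mono (TEx a)
| mono_arr  : forall t1 t2, mono t1 -> mono t2 -> mono (TArr t1 t2).

Fixpoint names_typ (A : typ) : list nat :=
  match A with
  | TFVar a => [a]
  | TEx a => [a]
  | TAll B => names_typ B
  | TArr B C => names_typ B ++ names_typ C
  | _ => []
  end.

Fixpoint evars_typ (A : typ) : list nat :=
  match A with
  | TEx a => [a]
  | TAll B => evars_typ B
  | TArr B C => evars_typ B ++ evars_typ C
  | _ => []
  end.

Fixpoint subst_ex (a : nat) (t : typ) (A : typ) : typ :=
  match A with
  | TEx b => if Nat.eqb a b then t else TEx b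
  | TAll B => TAll (subst_ex a t B)
  | TArr B C => TArr (subst_ex a t B) (subst_ex a t C)
  | _ => A
  end.

(* Context entries; contexts are lists written left to right,
   so "Gamma, e" is [Gamma ++ [e]]. *)
Inductive entry : Type :=
| CVar    : nat -> entry
| CTm     : nat -> typ -> entry
| CEx     : nat -> entry
| CSolved : nat -> typ -> entry
| CMark   : nat -> entry.

Definition ctx := list entry.

Definition dom_entry (e : entry) : list nat :=
  match e with
  | CVar a | CTm a _ | CEx a | CSolved a _ => [a]
  | CMark _ => []
  end.
Definition dom (G : ctx) : list nat := flat_map dom_entry G.

Definition marks (G : ctx) : list nat :=
  flat_map (fun e => match e with CMark a => [a] | _ => [] end) G.

Definition names_entry (e : entry) : list nat :=
  match e with
  | CVar a | CEx a | CMark a => [a]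
  | CTm a A | CSolved a A => a :: names_typ A
  end.
Definition names_ctx (G : ctx) : list nat := flat_map names_entry G.

Definition ex_declared (G : ctx) (a : nat) : Prop :=
  In (CEx a) G \/ exists t, In (CSolved a t) G.

Inductive wf_typ : ctx -> typ -> Prop :=
| wf_unit : forall G, wf_typ G TUnit
| wf_var  : forall G a, In (CVar a) G -> wf_typ G (TFVar a)
| wf_ex   : forall G a, ex_declared G a -> wf_typ G (TEx a)
| wf_arr  : forall G A B, wf_typ G A -> wf_typ G B -> wf_typ G (TArr A B)
| wf_all  : forall G A,
    (forall a, ~ In a (names_ctx G) -> wf_typ (G ++ [CVar a]) (open A (TFVar a))) ->
    wf_typ G (TAll A).

Inductive wf_ctx : ctx -> Prop :=
| wfc_nil  : wf_ctx []
| wfc_var  : forall G a, wf_ctx G -> ~ In a (dom G) -> wf_ctx (G ++ [CVar a])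
| wfc_tm   : forall G x A, wf_ctx G -> ~ In x (dom G) -> wf_typ G A ->
               wf_ctx (G ++ [CTm x A])
| wfc_ex   : forall G a, wf_ctx G -> ~ In a (dom G) -> wf_ctx (G ++ [CEx a])
| wfc_sol  : forall G a t, wf_ctx G -> ~ In a (dom G) -> mono t -> wf_typ G t ->
               wf_ctx (G ++ [CSolved a t])
| wfc_mark : forall G a, wf_ctx G -> ~ In a (dom G) -> ~ In a (marks G) ->
               wf_ctx (G ++ [CMark a]).

Definition decl_entry (e : entry) : Prop :=
  match e with CVar _ | CTm _ _ => True | _ => False end.
Definition decl_ctx (G : ctx) : Prop := Forall decl_entry G.

(* context application [G]A : the rightmost solution is substituted first,
   then the prefix is applied (solutions only mention earlier variables). *)
Definition ctx_apply (G : ctx) (A : typ) : typ :=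
  fold_right (fun e B => match e with
                         | CSolved a t => subst_ex a t B
                         | _ => B end) A G.

Inductive dsub : ctx -> typ -> typ -> Prop :=
| ds_var  : forall P a, In (CVar a) P -> dsub P (TFVar a) (TFVar a)
| ds_unit : forall P, dsub P TUnit TUnit
| ds_arr  : forall P A1 A2 B1 B2,
    dsub P B1 A1 -> dsub P A2 B2 -> dsub P (TArr A1 A2) (TArr B1 B2)
| ds_allL : forall P A B t,
    mono t -> wf_typ P t -> dsub P (open A t) B -> dsub P (TAll A) B
| ds_allR : forall P A B b,
    ~ In b (names_ctx P) -> ~ In b (names_typ A) -> ~ In b (names_typ B) ->
    dsub (P ++ [CVar b]) A (open B (TFVar b)) -> dsub P A (TAll B).

Definition fresh (a : nat) (G : ctx) (Ts : list typ) : Prop :=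
  ~ In a (names_ctx G) /\ Forall (fun T => ~ In a (names_typ T)) Ts.

(* Algorithmic subtyping  G |- A <: B -| D, and instantiation
   inst_l G a A D :  G |- a^ :<= A -| D
   inst_r G A a D :  G |- A <=: a^ -| D *)
Inductive asub : ctx -> typ -> typ -> ctx -> Prop :=
| as_var  : forall G a, In (CVar a) G -> asub G (TFVar a) (TFVar a) G
| as_unit : forall G, asub G TUnit TUnit G
| as_ex   : forall G a, In (CEx a) G -> asub G (TEx a) (TEx a) G
| as_arr  : forall G T D A1 A2 B1 B2,
    asub G B1 A1 T ->
    asub T (ctx_apply T A2) (ctx_apply T B2) D ->
    asub G (TArr A1 A2) (TArr B1 B2) D
| as_allL : forall G A B D Th a,
    fresh a G [A; B] ->
    asub (G ++ [CMark a; CEx a]) (open A (TEx a)) B (D ++ CMark a :: Th) ->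
    asub G (TAll A) B D
| as_allR : forall G A B D Th a,
    fresh a G [A; B] ->
    asub (G ++ [CVar a]) A (open B (TFVar a)) (D ++ CVar a :: Th) ->
    asub G A (TAll B) D
| as_instL : forall G a A D,
    In (CEx a) G -> ~ In a (evars_typ A) -> inst_l G a A D ->
    asub G (TEx a) A D
| as_instR : forall G a A D,
    In (CEx a) G -> ~ In a (evars_typ A) -> inst_r G A a D ->
    asub G A (TEx a) D
with inst_l : ctx -> nat -> typ -> ctx -> Prop :=
| il_solve : forall G1 G2 a t,
    mono t -> wf_typ G1 t ->
    inst_l (G1 ++ CEx a :: G2) a t (G1 ++ CSolved a t :: G2)
| il_reach : forall G1 G2 G3 a b,
    inst_l (G1 ++ CEx a :: G2 ++ CEx b :: G3) a (TEx b)
           (G1 ++ CEx a :: G2 ++ CSolved b (TEx a) :: G3)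
| il_arr : forall G1 G2 a a1 a2 A1 A2 Th D,
    a1 <> a2 ->
    fresh a1 (G1 ++ CEx a :: G2) [A1; A2] ->
    fresh a2 (G1 ++ CEx a :: G2) [A1; A2] ->
    inst_r (G1 ++ CEx a2 :: CEx a1 :: CSolved a (TArr (TEx a1) (TEx a2)) :: G2)
           A1 a1 Th ->
    inst_l Th a2 (ctx_apply Th A2) D ->
    inst_l (G1 ++ CEx a :: G2) a (TArr A1 A2) D
| il_allR : forall G a B b D D',
    In (CEx a) G -> fresh b G [B] ->
    inst_l (G ++ [CVar b]) a (open B (TFVar b)) (D ++ CVar b :: D') ->
    inst_l G a (TAll B) D
with inst_r : ctx -> typ -> nat -> ctx -> Prop :=
| ir_solve : forall G1 G2 a t,
    mono t -> wf_typ G1 t ->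
    inst_r (G1 ++ CEx a :: G2) t a (G1 ++ CSolved a t :: G2)
| ir_reach : forall G1 G2 G3 a b,
    inst_r (G1 ++ CEx a :: G2 ++ CEx b :: G3) (TEx b) a
           (G1 ++ CEx a :: G2 ++ CSolved b (TEx a) :: G3)
| ir_arr : forall G1 G2 a a1 a2 A1 A2 Th D,
    a1 <> a2 ->
    fresh a1 (G1 ++ CEx a :: G2) [A1; A2] ->
    fresh a2 (G1 ++ CEx a :: G2) [A1; A2] ->
    inst_l (G1 ++ CEx a2 :: CEx a1 :: CSolved a (TArr (TEx a1) (TEx a2)) :: G2)
           a1 A1 Th ->
    inst_r Th (ctx_apply Th A2) a2 D ->
    inst_r (G1 ++ CEx a :: G2) (TArr A1 A2) a D
| ir_allL : forall G a B b D D',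
    In (CEx a) G -> fresh b G [B] ->
    inst_r (G ++ [CMark b; CEx b]) (open B (TEx b)) a (D ++ CMark b :: D') ->
    inst_r G (TAll B) a D.

(* Main.v *)
Require Import Defs.
From Stdlib Require Import List Arith Lia Setoid.
Import ListNotations.

Fixpoint fvars (A : typ) : list nat :=
  match A with
  | TFVar a => [a]
  | TAll B => fvars B
  | TArr B C => fvars B ++ fvars C
  | _ => []
  end.

Fixpoint sapp (s : nat -> typ) (A : typ) : typ :=
  match A with
  | TEx a => s a
  | TAll B => TAll (sapp s B)
  | TArr B C => TArr (sapp s B) (sapp s C)
  | _ => A
  end.

Definition upd (s : nat -> typ) (a : nat) (v : typ) : nat -> typ :=
  fun y => if Nat.eqb y a then v else s y.

Lemma sapp_agree : forall s s' A,
  (forall x, In x (evars_typ A) -> s x = s' x) -> sapp s A = sapp s' A.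
Proof.
  intros s s' A; induction A; simpl; intros H; try reflexivity.
  - apply H; simpl; auto.
  - f_equal; auto.
  - rewrite IHA1, IHA2; auto; intros; apply H; apply in_or_app; auto.
Qed.

Lemma mono_open : forall t, mono t -> forall k u, open_rec k u t = t.
Proof. intros t Hm; induction Hm; intros; simpl; auto. rewrite IHHm1, IHHm2; auto. Qed.

Lemma sapp_open : forall s, (forall x, mono (s x)) -> forall A k u,
  sapp s (open_rec k u A) = open_rec k (sapp s u) (sapp s A).
Proof.
  intros s Hs A; induction A; intros k u; simpl.
  - reflexivity.
  - destruct (Nat.eqb n k); reflexivity.
  - reflexivity.
  - rewrite (mono_open (s n) (Hs n)); reflexivity.
  - rewrite IHA; reflexivity.
  - rewrite IHA1, IHA2; reflexivity.
Qed.

Lemma evars_open : forall A k u x, In x (evars_typ (open_rec k u A)) ->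
  In x (evars_typ A) \/ In x (evars_typ u).
Proof.
  induction A; intros k u x H; simpl in *; auto.
  - destruct (Nat.eqb n k); simpl in H; auto.
  - eapply IHA; eauto.
  - apply in_app_or in H. destruct H as [H|H].
    + destruct (IHA1 _ _ _ H); auto using in_or_app.
    + destruct (IHA2 _ _ _ H); auto using in_or_app.
Qed.

Lemma evars_open_incl : forall A k u x, In x (evars_typ A) -> In x (evars_typ (open_rec k u A)).
Proof.
  induction A; intros k u x H; simpl in *; try tauto; eauto.
  apply in_app_or in H; apply in_or_app; destruct H; eauto.
Qed.

Lemma evars_sapp : forall s, (forall x, evars_typ (s x) = []) -> forall A, evars_typ (sapp s A) = [].
Proof.
  intros s Hs A; induction A; simpl; auto. rewrite IHA1, IHA2; auto.
Qed.

Lemma fvars_sapp : forall s A y, In y (fvars (sapp s A)) ->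
  In y (fvars A) \/ exists x, In y (fvars (s x)).
Proof.
  intros s A y; induction A; simpl; intros H; eauto.
  apply in_app_or in H; destruct H as [H|H].
  - destruct (IHA1 H); auto using in_or_app.
  - destruct (IHA2 H); auto using in_or_app.
Qed.

Lemma names_sapp : forall s A y, In y (names_typ (sapp s A)) ->
  In y (names_typ A) \/ exists x, In y (names_typ (s x)).
Proof.
  intros s A y; induction A; simpl; intros H; eauto.
  apply in_app_or in H; destruct H as [H|H].
  - destruct (IHA1 H); auto using in_or_app.
  - destruct (IHA2 H); auto using in_or_app.
Qed.

Lemma names_noev : forall t y, evars_typ t = [] -> In y (names_typ t) -> In y (fvars t).
Proof.
  induction t; simpl; intros y He H; auto; try discriminate.
  apply app_eq_nil in He; destruct He.
  apply in_app_or in H; apply in_or_app; destruct H; auto.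
Qed.

Lemma mono_sapp : forall s, (forall x, mono (s x)) -> forall t, mono t -> mono (sapp s t).
Proof. intros s Hs t Hm; induction Hm; simpl; try constructor; auto. Qed.

Lemma evars_subst : forall a t B y, In y (evars_typ (subst_ex a t B)) ->
  In y (evars_typ B) \/ In y (evars_typ t).
Proof.
  intros a t B y; induction B; simpl; intros H; auto.
  - destruct (Nat.eqb a n); simpl in H; auto.
  - apply in_app_or in H; destruct H as [H|H].
    + destruct (IHB1 H); auto using in_or_app.
    + destruct (IHB2 H); auto using in_or_app.
Qed.

Lemma sapp_subst : forall s a t B, s a = sapp s t -> sapp s (subst_ex a t B) = sapp s B.
Proof.
  intros s a t B H; induction B; simpl; try reflexivity.
  - destruct (Nat.eqb a n) eqn:E; [apply Nat.eqb_eq in E; subst; auto | reflexivity].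
  - rewrite IHB; auto.
  - rewrite IHB1, IHB2; auto.
Qed.

Lemma sapp_closed : forall s A, evars_typ A = [] -> sapp s A = A.
Proof.
  intros s A; induction A; simpl; intros H; auto; try discriminate.
  - rewrite IHA; auto.
  - apply app_eq_nil in H; destruct H; rewrite IHA1, IHA2; auto.
Qed.

Definition proj_entry (e : entry) : list entry :=
  match e with CVar _ | CTm _ _ | CMark _ => [e] | _ => [] end.
Definition proj (G : ctx) : list entry := flat_map proj_entry G.
Definition declf_entry (e : entry) : list entry :=
  match e with CVar _ | CTm _ _ => [e] | _ => [] end.
Definition declf (G : ctx) : ctx := flat_map declf_entry G.

Lemma dom_app : forall G H, dom (G ++ H) = dom G ++ dom H.
Proof. intros; unfold dom; apply flat_map_app. Qed.
Lemma dom_cons : forall e G, dom (e :: G) = dom_entry e ++ dom G.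
Proof. reflexivity. Qed.
Lemma proj_app : forall G H, proj (G ++ H) = proj G ++ proj H.
Proof. intros; unfold proj; apply flat_map_app. Qed.
Lemma proj_cons : forall e G, proj (e :: G) = proj_entry e ++ proj G.
Proof. reflexivity. Qed.
Lemma declf_app : forall G H, declf (G ++ H) = declf G ++ declf H.
Proof. intros; unfold declf; apply flat_map_app. Qed.

Lemma declf_proj : forall G, declf G = declf (proj G).
Proof.
  induction G as [|e G IH]; [reflexivity|].
  rewrite proj_cons, declf_app. change (declf (e :: G)) with (declf_entry e ++ declf G).
  rewrite <- IH; destruct e; reflexivity.
Qed.

Lemma declf_eq : forall D G, proj D = proj G -> declf D = declf G.
Proof. intros D G H; rewrite (declf_proj D), (declf_proj G), H; reflexivity. Qed.

Lemma cvar_proj : forall G y, In (CVar y) (proj G) <-> In (CVar y) G.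
Proof.
  intros G y; unfold proj; rewrite in_flat_map; split.
  - intros [e [He H]]; destruct e; simpl in H; try contradiction;
      destruct H as [H|[]]; inversion H; subst; assumption.
  - intros H; exists (CVar y); split; simpl; auto.
Qed.

Lemma proj_in : forall G e, In e (proj G) -> In e G.
Proof.
  intros G e; unfold proj; rewrite in_flat_map.
  intros [e' [He H]]; destruct e'; simpl in H; try contradiction;
    destruct H as [H|[]]; subst; assumption.
Qed.

Lemma cvar_proj_eq : forall D G y, proj D = proj G -> In (CVar y) D -> In (CVar y) G.
Proof. intros D G y H H1. apply cvar_proj; rewrite <- H; apply cvar_proj; auto. Qed.

Lemma declf_cvar : forall G y, In (CVar y) G -> In (CVar y) (declf G).
Proof. intros G y H; unfold declf; apply in_flat_map; exists (CVar y); simpl; auto. Qed.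

Lemma In_names : forall G e x, In e G -> In x (names_entry e) -> In x (names_ctx G).
Proof. intros G e x H1 H2; unfold names_ctx; apply in_flat_map; eauto. Qed.

Lemma dom_names : forall G x, In x (dom G) -> In x (names_ctx G).
Proof.
  intros G x H; unfold dom in H; apply in_flat_map in H; destruct H as [e [He H]].
  apply (In_names _ e); auto; destruct e; simpl in *; tauto.
Qed.

Lemma names_declf : forall G x, In x (names_ctx (declf G)) -> In x (names_ctx G).
Proof.
  intros G x H; unfold names_ctx in H; apply in_flat_map in H; destruct H as [e [He H]].
  unfold declf in He; apply in_flat_map in He; destruct He as [e' [He' H']].
  destruct e'; simpl in H'; try contradiction; destruct H' as [H'|[]]; subst;
    eapply In_names; eauto.
Qed.

Lemma solved_dom : forall G x t, In (CSolved x t) G -> In x (dom G).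
Proof. intros; unfold dom; apply in_flat_map; exists (CSolved x t); simpl; auto. Qed.
Lemma cex_dom : forall G x, In (CEx x) G -> In x (dom G).
Proof. intros; unfold dom; apply in_flat_map; exists (CEx x); simpl; auto. Qed.

Definition entry_ok (p : ctx) (e : entry) : Prop :=
  (forall x, In x (dom_entry e) -> ~ In x (dom p)) /\
  match e with
  | CSolved _ t => mono t /\ incl (evars_typ t) (dom p) /\ (forall y, In y (fvars t) -> In (CVar y) p)
  | _ => True
  end.
Fixpoint okc_from (p G : ctx) : Prop :=
  match G with [] => True | e :: G' => entry_ok p e /\ okc_from (p ++ [e]) G' end.
Definition okctx (G : ctx) := okc_from [] G.

Lemma okc_app : forall L p R, okc_from p (L ++ R) <-> okc_from p L /\ okc_from (p ++ L) R.
Proof.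
  induction L as [|e L IH]; intros p R; simpl.
  - rewrite app_nil_r; tauto.
  - rewrite IH, <- app_assoc; simpl; tauto.
Qed.

Lemma okctx_app : forall L R, okctx (L ++ R) <-> okctx L /\ okc_from L R.
Proof. intros; unfold okctx; rewrite okc_app; simpl; tauto. Qed.

Lemma okc_disj : forall R p x, okc_from p R -> In x (dom p) -> ~ In x (dom R).
Proof.
  induction R as [|e R IH]; cbn [okc_from]; intros p x H Hx Hin; [exact Hin|].
  destruct H as [[H1 _] H2]. rewrite dom_cons in Hin; apply in_app_or in Hin; destruct Hin as [Hin|Hin].
  - exact (H1 x Hin Hx).
  - apply (IH _ x H2); auto. rewrite dom_app; apply in_or_app; auto.
Qed.

Lemma okc_solved : forall G p x t, okc_from p G -> In (CSolved x t) G ->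
  mono t /\ incl (evars_typ t) (dom (p ++ G)) /\ (forall y, In y (fvars t) -> In (CVar y) (p ++ G)).
Proof.
  induction G as [|e G IH]; cbn [okc_from In]; intros p x t H Hin; [contradiction|].
  destruct H as [[H1 H3] H2]. destruct Hin as [Hin|Hin].
  - subst. destruct H3 as [Hm [Hi Hf]]. split; [auto|split].
    + intros z Hz; rewrite dom_app; apply in_or_app; auto.
    + intros y Hy; apply in_or_app; auto.
  - destruct (IH _ _ _ H2 Hin) as [Hm [Hi Hf]]. rewrite <- app_assoc in Hi, Hf. simpl in Hi, Hf. auto.
Qed.

Lemma okctx_solved : forall G x t, okctx G -> In (CSolved x t) G ->
  mono t /\ incl (evars_typ t) (dom G) /\ (forall y, In y (fvars t) -> In (CVar y) G).
Proof. intros G x t H Hin; exact (okc_solved G [] x t H Hin). Qed.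

Lemma okc_mono : forall R p p', okc_from p R -> incl (dom p) (dom p') ->
  (forall y, In (CVar y) p -> In (CVar y) p') ->
  (forall x, In x (dom p') -> ~ In x (dom p) -> ~ In x (dom R)) -> okc_from p' R.
Proof.
  induction R as [|e R IH]; cbn [okc_from]; intros p p' H Hd Hc Hn; auto.
  destruct H as [[H1 H3] H2]. split; [split|].
  - intros x Hx Hx'. destruct (in_dec Nat.eq_dec x (dom p)) as [Hp|Hp].
    + exact (H1 x Hx Hp).
    + apply (Hn x Hx' Hp). rewrite dom_cons; apply in_or_app; auto.
  - destruct e; auto. destruct H3 as [Hm [Hi Hf]]. split; [auto|split]; auto.
    intros z Hz; apply Hd; apply Hi; auto.
  - apply (IH (p ++ [e])); auto.
    + intros z; rewrite !dom_app; intros Hz; apply in_app_or in Hz; apply in_or_app; destruct Hz; auto.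
    + intros y Hy; apply in_app_or in Hy; apply in_or_app; destruct Hy; auto.
    + intros x; rewrite !dom_app; intros Hx Hx' Hr. apply in_app_or in Hx; destruct Hx as [Hx|Hx].
      * destruct (in_dec Nat.eq_dec x (dom p)) as [Hp|Hp].
        -- apply Hx'; apply in_or_app; auto.
        -- apply (Hn x Hx Hp); rewrite dom_cons; apply in_or_app; auto.
      * apply Hx'; apply in_or_app; auto.
Qed.

Fixpoint pb (G : ctx) (x : nat) : option (list entry) :=
  match G with
  | [] => None
  | e :: G' => if in_dec Nat.eq_dec x (dom_entry e) then Some []
               else match pb G' x with Some l => Some (proj_entry e ++ l) | None => None end
  end.

Lemma pb_app : forall L R x, pb (L ++ R) x =
  match pb L x with Some l => Some l
  | None => match pb R x with Some l => Some (proj L ++ l) | None => None end end.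
Proof.
  induction L as [|e L IH]; intros R x; cbn [pb app].
  - destruct (pb R x); reflexivity.
  - destruct (in_dec Nat.eq_dec x (dom_entry e)); [reflexivity|].
    rewrite IH. destruct (pb L x); [reflexivity|]. destruct (pb R x); [|reflexivity].
    rewrite proj_cons, app_assoc; reflexivity.
Qed.

Lemma pb_some : forall G x l, pb G x = Some l -> In x (dom G) /\ incl l (proj G).
Proof.
  induction G as [|e G IH]; cbn [pb]; intros x l H; [discriminate|].
  rewrite dom_cons, proj_cons.
  destruct (in_dec Nat.eq_dec x (dom_entry e)) as [Hi|Hi].
  - inversion H; subst; split; [apply in_or_app; auto| intros z []].
  - destruct (pb G x) as [l'|] eqn:E; [|discriminate]. inversion H; subst.
    destruct (IH _ _ E) as [H1 H2]; split; [apply in_or_app; auto|].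
    intros z Hz; apply in_app_or in Hz; apply in_or_app; destruct Hz; auto.
Qed.

Lemma pb_dom : forall G x, In x (dom G) -> exists l, pb G x = Some l.
Proof.
  induction G as [|e G IH]; cbn [pb]; intros x H; [contradiction|].
  rewrite dom_cons in H.
  destruct (in_dec Nat.eq_dec x (dom_entry e)) as [Hi|Hi]; eauto.
  apply in_app_or in H; destruct H as [H|H]; [contradiction|].
  destruct (IH _ H) as [l E]; rewrite E; eauto.
Qed.

Lemma pb_none : forall G x, pb G x = None -> ~ In x (dom G).
Proof. intros G x H Hx; destruct (pb_dom G x Hx) as [l E]; congruence. Qed.

Definition valid (s : nat -> typ) (D : ctx) : Prop :=
  (forall x, mono (s x) /\ evars_typ (s x) = [] /\ (forall y, In y (fvars (s x)) -> In (CVar y) D)) /\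
  (forall x t, In (CSolved x t) D -> s x = sapp s t).

Definition Out (G D : ctx) : Prop :=
  okctx D /\ proj D = proj G /\ (forall x l, pb G x = Some l -> pb D x = Some l) /\
  (forall x t, In (CSolved x t) G -> In (CSolved x t) D).

Lemma Out_refl : forall G, okctx G -> Out G G.
Proof. intros; repeat split; auto. Qed.

Lemma Out_trans : forall G T D, Out G T -> Out T D -> Out G D.
Proof.
  intros G T D [H1 [H2 [H3 H4]]] [K1 [K2 [K3 K4]]]; repeat split; auto; congruence.
Qed.

Lemma Out_dom : forall G D x, Out G D -> In x (dom G) -> In x (dom D).
Proof.
  intros G D x [_ [_ [H _]]] Hx. destruct (pb_dom G x Hx) as [l E].
  apply (pb_some D x l); auto.
Qed.

Lemma valid_back : forall s T D, Out T D -> valid s D -> valid s T.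
Proof.
  intros s T D [_ [Hp [_ Hs]]] [V1 V2]; split; auto.
  intros x; destruct (V1 x) as [A [B C]]; repeat split; auto.
  intros y Hy; eapply cvar_proj_eq; eauto.
Qed.

Lemma valid_upd : forall s Pre a v, okctx Pre -> valid s Pre -> ~ In a (dom Pre) ->
  mono v -> evars_typ v = [] -> (forall y, In y (fvars v) -> In (CVar y) Pre) ->
  valid (upd s a v) Pre.
Proof.
  intros s Pre a v Hok [V1 V2] Ha Hm He Hf; split.
  - intros x; unfold upd; destruct (Nat.eqb x a); auto.
  - intros x t Hin. unfold upd at 1.
    destruct (Nat.eqb x a) eqn:E.
    + apply Nat.eqb_eq in E; subst. exfalso; apply Ha; eapply solved_dom; eauto.
    + rewrite (V2 _ _ Hin). apply sapp_agree. intros z Hz. unfold upd.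
      destruct (Nat.eqb z a) eqn:E2; auto. apply Nat.eqb_eq in E2; subst.
      exfalso; apply Ha. destruct (okctx_solved _ _ _ Hok Hin) as [_ [Hi _]]; auto.
Qed.

Lemma valid_snoc : forall s Pre e, valid s Pre ->
  (forall x t, e = CSolved x t -> s x = sapp s t) -> valid s (Pre ++ [e]).
Proof.
  intros s Pre e [V1 V2] He; split.
  - intros x; destruct (V1 x) as [A [B C]]; repeat split; auto.
    intros y Hy; apply in_or_app; auto.
  - intros x t Hin; apply in_app_or in Hin; destruct Hin as [Hin|[Hin|[]]]; auto.
Qed.

Lemma extend_step : forall Pre e s, okctx Pre -> entry_ok Pre e -> valid s Pre ->
  exists s', valid s' (Pre ++ [e]) /\ forall x, ~ In x (dom_entry e) -> s' x = s x.
Proof.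
  intros Pre e s Hok [He Hs] Hv.
  destruct e as [a|a A|a|a t|a].
  - exists s; split; auto. apply valid_snoc; auto; discriminate.
  - exists s; split; auto. apply valid_snoc; auto; discriminate.
  - exists (upd s a TUnit); split.
    + apply valid_snoc; [|discriminate]. apply valid_upd; auto.
      * apply He; simpl; auto.
      * constructor.
      * intros y [].
    + intros x Hx; unfold upd; destruct (Nat.eqb x a) eqn:E; auto.
      apply Nat.eqb_eq in E; subst; exfalso; apply Hx; simpl; auto.
  - destruct Hs as [Hm [Hi Hf]]. destruct Hv as [V1 V2] eqn:Hv'.
    assert (Ha : ~ In a (dom Pre)) by (apply He; simpl; auto).
    assert (Hag : sapp (upd s a (sapp s t)) t = sapp s t).
    { apply sapp_agree; intros z Hz; unfold upd; destruct (Nat.eqb z a) eqn:E; auto.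
      apply Nat.eqb_eq in E; subst; exfalso; apply Ha; apply Hi; auto. }
    exists (upd s a (sapp s t)); split.
    + apply valid_snoc.
      * apply valid_upd; auto.
        -- apply mono_sapp; auto; intros x; apply V1.
        -- apply evars_sapp; intros x; apply V1.
        -- intros y Hy; apply fvars_sapp in Hy; destruct Hy as [Hy|[x Hy]]; auto.
           apply (V1 x); auto.
      * intros x t' E; inversion E; subst. rewrite Hag. unfold upd; rewrite Nat.eqb_refl; reflexivity.
    + intros x Hx; unfold upd; destruct (Nat.eqb x a) eqn:E; auto.
      apply Nat.eqb_eq in E; subst; exfalso; apply Hx; simpl; auto.
  - exists s; split; auto. apply valid_snoc; auto; discriminate.
Qed.

Lemma extend : forall Th Pre s, okctx (Pre ++ Th) -> valid s Pre ->
  exists s', valid s' (Pre ++ Th) /\ forall x, ~ In x (dom Th) -> s' x = s x.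
Proof.
  induction Th as [|e Th IH]; intros Pre s Hok Hv.
  - exists s; rewrite app_nil_r; split; auto.
  - apply okctx_app in Hok as Hok'. destruct Hok' as [H1 [H2 H3]].
    destruct (extend_step Pre e s H1 H2 Hv) as [s1 [Hv1 Ha1]].
    assert (Hok2 : okctx ((Pre ++ [e]) ++ Th)) by (rewrite <- app_assoc; exact Hok).
    destruct (IH _ _ Hok2 Hv1) as [s2 [Hv2 Ha2]].
    exists s2; split.
    + rewrite <- app_assoc in Hv2; exact Hv2.
    + intros x Hx; rewrite dom_cons in Hx. rewrite Ha2, Ha1; auto; intro; apply Hx; apply in_or_app; auto.
Qed.

Lemma Out_repl : forall L M M' R, okctx (L ++ M ++ R) -> okc_from L M' ->
  proj M = [] -> proj M' = [] -> incl (dom M) (dom M') ->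
  (forall x, In x (dom M') -> ~ In x (dom M) -> ~ In x (dom R)) ->
  (forall x t, In (CSolved x t) M -> In (CSolved x t) M') ->
  Out (L ++ M ++ R) (L ++ M' ++ R).
Proof.
  intros L M M' R Hok HM' Hp Hp' Hd Hn Hs.
  apply okctx_app in Hok; destruct Hok as [HL HMR]. apply okc_app in HMR; destruct HMR as [HM HR].
  split; [|split; [|split]].
  - apply okctx_app; split; auto. apply okc_app; split; auto.
    apply (okc_mono R (L ++ M)); auto.
    + intros z; rewrite !dom_app; intros Hz; apply in_app_or in Hz; apply in_or_app; destruct Hz; auto.
    + intros y Hy; apply in_app_or in Hy; apply in_or_app; destruct Hy as [Hy|Hy]; auto.
      apply cvar_proj in Hy; rewrite Hp in Hy; contradiction.
    + intros x; rewrite !dom_app; intros Hx Hx'. apply in_app_or in Hx; destruct Hx as [Hx|Hx].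
      * exfalso; apply Hx'; apply in_or_app; auto.
      * apply Hn; auto; intro; apply Hx'; apply in_or_app; auto.
  - rewrite !proj_app, Hp, Hp'; reflexivity.
  - intros x l H. rewrite pb_app in H |- *. destruct (pb L x); auto.
    rewrite pb_app in H |- *. destruct (pb M x) as [l0|] eqn:E0.
    + destruct (pb_some _ _ _ E0) as [H1 H2]. rewrite Hp in H2.
      destruct (pb_dom M' x (Hd _ H1)) as [l1 E1]. rewrite E1.
      destruct (pb_some _ _ _ E1) as [_ H3]. rewrite Hp' in H3.
      destruct l0 as [|z l0]; [|exfalso; apply (H2 z); simpl; auto].
      destruct l1 as [|z l1]; [|exfalso; apply (H3 z); simpl; auto]. exact H.
    + destruct (pb M' x) as [l1|] eqn:E1.
      * exfalso. destruct (pb R x) as [l2|] eqn:E2; [|discriminate].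
        destruct (pb_some _ _ _ E1) as [H1 _]. destruct (pb_some _ _ _ E2) as [H2 _].
        exact (Hn x H1 (pb_none _ _ E0) H2).
      * rewrite Hp in H; rewrite Hp'; exact H.
  - intros x t H. apply in_app_or in H; apply in_or_app; destruct H as [H|H]; auto.
    right; apply in_app_or in H; apply in_or_app; destruct H; auto.
Qed.

Lemma last_split : forall (l1 l2 l3 : list entry) y, l1 ++ y :: l2 = l3 ++ [y] -> ~ In y l3 -> l1 = l3.
Proof.
  intros l1 l2 l3 y H Hn. destruct l2 as [|z l2] using rev_ind.
  - apply app_inj_tail in H; tauto.
  - exfalso. rewrite app_comm_cons, app_assoc in H. apply app_inj_tail in H. destruct H as [H _].
    apply Hn; rewrite <- H; apply in_or_app; simpl; auto.
Qed.

Lemma drop_suffix : forall G N D m Th b,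
  Out (G ++ N) (D ++ m :: Th) -> proj N = [m] -> (m = CVar b \/ m = CMark b) ->
  ~ In b (names_ctx G) ->
  Out G D /\ (forall x, In x (dom G) -> ~ In x (dom (m :: Th))).
Proof.
  intros G N D m Th b [Hok [Hp [Hpb Hs]]] HN Hm Hb.
  assert (Hmb : In b (names_entry m)) by (destruct Hm; subst; simpl; auto).
  assert (HmG : ~ In m (proj G)) by (intro H; apply Hb; eapply In_names; eauto; apply proj_in; eauto).
  apply okctx_app in Hok as Hok'; destruct Hok' as [HD HmT].
  assert (Hpb' : forall x l, pb G x = Some l -> pb D x = Some l).
  { intros x l H. assert (H' := Hpb x l). rewrite !pb_app, H in H'.
    specialize (H' eq_refl). destruct (pb D x) as [l'|]; auto.
    destruct (pb (m :: Th) x) as [l''|] eqn:E; [|discriminate]. inversion H'; subst.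
    exfalso. cbn [pb] in E. destruct (pb_some _ _ _ H) as [Hx Hl].
    destruct (in_dec Nat.eq_dec x (dom_entry m)) as [Hi|Hi].
    - apply Hb. destruct Hm; subst; simpl in Hi; try contradiction; destruct Hi as [Hi|[]]; subst; apply dom_names; auto.
    - destruct (pb Th x); [|discriminate]. inversion E; subst.
      apply HmG, Hl. apply in_or_app; right; destruct Hm; subst; simpl; auto. }
  assert (Hdisj : forall x, In x (dom G) -> ~ In x (dom (m :: Th))).
  { intros x Hx. destruct (pb_dom G x Hx) as [l E]. apply Hpb' in E.
    destruct (pb_some _ _ _ E) as [H _]. eapply okc_disj; eauto. }
  split; [split; [|split; [|split]]|]; auto.
  - rewrite !proj_app, HN, proj_cons in Hp. replace (proj_entry m) with [m] in Hp
      by (destruct Hm; subst; reflexivity). simpl in Hp. eapply last_split; eauto.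
  - intros x t H. assert (H' : In (CSolved x t) (D ++ m :: Th)) by (apply Hs; apply in_or_app; auto).
    apply in_app_or in H'; destruct H' as [H'|H']; auto.
    exfalso; apply (Hdisj x); [eapply solved_dom; eauto| eapply solved_dom; eauto].
Qed.

Lemma sig_names : forall s D G a x, valid s D -> (forall y, In (CVar y) D -> In (CVar y) G) ->
  ~ In a (names_ctx G) -> ~ In a (names_typ (s x)).
Proof.
  intros s D G a x [V1 _] HV Ha H. destruct (V1 x) as [_ [He Hf]].
  apply names_noev in H; auto. apply Ha; eapply In_names; [apply HV, Hf, H|simpl; auto].
Qed.

Lemma fresh_sapp : forall s D G a A, valid s D -> (forall y, In (CVar y) D -> In (CVar y) G) ->
  ~ In a (names_ctx G) -> ~ In a (names_typ A) -> ~ In a (names_typ (sapp s A)).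
Proof.
  intros s D G a A Hv HV Ha HA H. apply names_sapp in H; destruct H as [H|[x H]]; auto.
  eapply sig_names; eauto.
Qed.

Lemma mono_refl : forall P t, mono t -> evars_typ t = [] ->
  (forall y, In y (fvars t) -> In (CVar y) P) -> dsub P t t.
Proof.
  intros P t Hm; induction Hm; simpl; intros He Hf.
  - constructor.
  - constructor; auto.
  - discriminate.
  - apply app_eq_nil in He; destruct He. constructor; [apply IHHm1|apply IHHm2]; auto;
      intros; apply Hf; apply in_or_app; auto.
Qed.

Lemma mono_wfP : forall P t, mono t -> evars_typ t = [] ->
  (forall y, In y (fvars t) -> In (CVar y) P) -> wf_typ P t.
Proof.
  intros P t Hm; induction Hm; simpl; intros He Hf.
  - constructor.
  - constructor; auto.
  - discriminate.
  - apply app_eq_nil in He; destruct He. constructor; [apply IHHm1|apply IHHm2]; auto;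
      intros; apply Hf; apply in_or_app; auto.
Qed.

Lemma sig_refl : forall s D G x, valid s D -> (forall y, In (CVar y) D -> In (CVar y) G) ->
  dsub (declf G) (s x) (s x).
Proof.
  intros s D G x [V1 _] HV. destruct (V1 x) as [Hm [He Hf]].
  apply mono_refl; auto. intros; apply declf_cvar, HV, Hf; auto.
Qed.

Lemma sig_wf : forall s D G x, valid s D -> (forall y, In (CVar y) D -> In (CVar y) G) ->
  wf_typ (declf G) (s x).
Proof.
  intros s D G x [V1 _] HV. destruct (V1 x) as [Hm [He Hf]].
  apply mono_wfP; auto. intros; apply declf_cvar, HV, Hf; auto.
Qed.

Lemma mono_wf : forall G t, mono t -> wf_typ G t ->
  incl (evars_typ t) (dom G) /\ (forall y, In y (fvars t) -> In (CVar y) G).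
Proof.
  intros G t Hm; induction Hm; intros Hw; simpl.
  - split; [intros z []|intros y []].
  - inversion Hw; subst. split; [intros z []|intros y [H|[]]; subst; auto].
  - inversion Hw; subst. split; [|intros y []].
    intros z [Hz|[]]; subst. destruct H1 as [H|[t H]]; [eapply cex_dom|eapply solved_dom]; eauto.
  - inversion Hw; subst. destruct (IHHm1 H2), (IHHm2 H3). split.
    + intros z Hz; apply in_app_or in Hz; destruct Hz; auto.
    + intros y Hy; apply in_app_or in Hy; destruct Hy; auto.
Qed.

Lemma ctx_apply_evars : forall G A S, (forall x t, In (CSolved x t) G -> incl (evars_typ t) S) ->
  incl (evars_typ A) S -> incl (evars_typ (ctx_apply G A)) S.
Proof.
  induction G as [|e G IH]; intros A S HG HA; simpl; auto.
  assert (H : incl (evars_typ (ctx_apply G A)) S) by (apply IH; auto; intros; eapply HG; simpl; eauto).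
  destruct e; auto. intros z Hz. apply evars_subst in Hz; destruct Hz; auto.
  eapply HG; simpl; eauto.
Qed.

Lemma sapp_ctx_apply : forall s G A, (forall x t, In (CSolved x t) G -> s x = sapp s t) ->
  sapp s (ctx_apply G A) = sapp s A.
Proof.
  induction G as [|e G IH]; intros A HG; simpl; auto.
  destruct e; try (apply IH; intros; apply HG; simpl; auto).
  rewrite sapp_subst; [apply IH; intros; apply HG; simpl; auto|apply HG; simpl; auto].
Qed.

Lemma fresh2 : forall a G A B, fresh a G [A; B] ->
  ~ In a (names_ctx G) /\ ~ In a (names_typ A) /\ ~ In a (names_typ B).
Proof.
  intros a G A B [H1 H2]. inversion H2; subst. inversion H4; subst. auto.
Qed.

Lemma fresh1 : forall a G A, fresh a G [A] -> ~ In a (names_ctx G) /\ ~ In a (names_typ A).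
Proof. intros a G A [H1 H2]. inversion H2; subst. auto. Qed.

Lemma okctx_var : forall G a, okctx G -> ~ In a (names_ctx G) -> okctx (G ++ [CVar a]).
Proof.
  intros G a H Ha. apply okctx_app; split; auto. cbn [okc_from]; split; auto.
  split; auto. intros x [Hx|[]]; subst; intro; apply Ha; apply dom_names; auto.
Qed.

Lemma okctx_mark : forall G a, okctx G -> ~ In a (names_ctx G) -> okctx (G ++ [CMark a; CEx a]).
Proof.
  intros G a H Ha. apply okctx_app; split; auto. cbn [okc_from].
  split; [split; [intros x []|exact I]|split; [split; [|exact I]|exact I]].
  intros x [Hx|[]]; subst. rewrite dom_app, in_app_iff. simpl.
  intros [H1|[]]; apply Ha; apply dom_names; auto.
Qed.

Lemma Out_cvar : forall G D y, Out G D -> In (CVar y) D -> In (CVar y) G.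
Proof. intros G D y [_ [Hp _]] H; eapply cvar_proj_eq; eauto. Qed.

Lemma hv_suffix : forall G N D y, Out (G ++ N) D -> (forall z, ~ In (CVar z) N) ->
  In (CVar y) D -> In (CVar y) G.
Proof.
  intros G N D y O HN H. apply (Out_cvar _ _ _ O) in H. apply in_app_or in H; destruct H; auto.
  exfalso; eapply HN; eauto.
Qed.

Lemma incl_snoc : forall G N (l : list nat), incl l (dom G) -> incl l (dom (G ++ N)).
Proof. intros G N l H z Hz; rewrite dom_app; apply in_or_app; auto. Qed.

Lemma incl_app_l : forall (l1 l2 m : list nat), incl (l1 ++ l2) m -> incl l1 m /\ incl l2 m.
Proof. intros l1 l2 m H; split; intros z Hz; apply H; apply in_or_app; auto. Qed.

Scheme asub_min := Minimality for asub Sort Prop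
with inst_l_min := Minimality for inst_l Sort Prop
with inst_r_min := Minimality for inst_r Sort Prop.
Combined Scheme asub_mut from asub_min, inst_l_min, inst_r_min.

Definition Pa G A B D := okctx G -> incl (evars_typ A) (dom G) -> incl (evars_typ B) (dom G) ->
  Out G D /\ forall s, valid s D -> dsub (declf G) (sapp s A) (sapp s B).
Definition Pl G a A D := okctx G -> incl (evars_typ A) (dom G) ->
  Out G D /\ forall s, valid s D -> dsub (declf G) (s a) (sapp s A).
Definition Pr G A a D := okctx G -> incl (evars_typ A) (dom G) ->
  Out G D /\ forall s, valid s D -> dsub (declf G) (sapp s A) (s a).

Lemma solve_case : forall G1 G2 a t, mono t -> wf_typ G1 t -> okctx (G1 ++ CEx a :: G2) ->
  Out (G1 ++ CEx a :: G2) (G1 ++ CSolved a t :: G2) /\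
  forall s, valid s (G1 ++ CSolved a t :: G2) -> dsub (declf (G1 ++ CEx a :: G2)) (s a) (s a) /\
     s a = sapp s t.
Proof.
  intros G1 G2 a t Hm Hw HG.
  assert (Ha : ~ In a (dom G1)).
  { apply okctx_app in HG; destruct HG as [_ [[H _] _]]; apply H; simpl; auto. }
  destruct (mono_wf G1 t Hm Hw) as [Hi Hf].
  assert (O : Out (G1 ++ [CEx a] ++ G2) (G1 ++ [CSolved a t] ++ G2)).
  { apply Out_repl; [exact HG| |reflexivity|reflexivity| | |].
    - cbn [okc_from]; split; [split|exact I].
      + intros x [Hx|[]]; subst; auto.
      + split; auto.
    - apply incl_refl.
    - intros x H1 H2; exfalso; apply H2; exact H1.
    - intros x t' [H|[]]; discriminate. }
  change (Out (G1 ++ CEx a :: G2) (G1 ++ CSolved a t :: G2)) in O.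
  split; auto. intros s Hs. split.
  - eapply sig_refl; eauto. intros y; apply Out_cvar; auto.
  - apply (proj2 Hs). apply in_or_app; simpl; auto.
Qed.

Lemma reach_case : forall G1 G2 G3 a b, okctx (G1 ++ CEx a :: G2 ++ CEx b :: G3) ->
  Out (G1 ++ CEx a :: G2 ++ CEx b :: G3) (G1 ++ CEx a :: G2 ++ CSolved b (TEx a) :: G3) /\
  forall s, valid s (G1 ++ CEx a :: G2 ++ CSolved b (TEx a) :: G3) ->
     dsub (declf (G1 ++ CEx a :: G2 ++ CEx b :: G3)) (s a) (s a) /\ s b = s a.
Proof.
  intros G1 G2 G3 a b HG.
  assert (E1 : G1 ++ CEx a :: G2 ++ CEx b :: G3 = (G1 ++ CEx a :: G2) ++ [CEx b] ++ G3)
    by (rewrite <- app_assoc; reflexivity).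
  assert (E2 : G1 ++ CEx a :: G2 ++ CSolved b (TEx a) :: G3 =
               (G1 ++ CEx a :: G2) ++ [CSolved b (TEx a)] ++ G3)
    by (rewrite <- app_assoc; reflexivity).
  rewrite E1, E2 in *. set (L := G1 ++ CEx a :: G2) in *.
  assert (Hb : ~ In b (dom L)).
  { apply okctx_app in HG; destruct HG as [_ [[H _] _]]; apply H; simpl; auto. }
  assert (HaL : In a (dom L)).
  { unfold L; rewrite dom_app, dom_cons; apply in_or_app; right; simpl; auto. }
  assert (O : Out (L ++ [CEx b] ++ G3) (L ++ [CSolved b (TEx a)] ++ G3)).
  { apply Out_repl; [exact HG| |reflexivity|reflexivity| | |].
    - cbn [okc_from]; split; [split|exact I].
      + intros x [Hx|[]]; subst; auto.
      + split; [constructor|split].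
        * intros z [Hz|[]]; subst; auto.
        * intros y [].
    - apply incl_refl.
    - intros x H1 H2; exfalso; apply H2; exact H1.
    - intros x t' [H|[]]; discriminate. }
  split; auto. intros s Hs. split.
  - eapply sig_refl; eauto. intros y; apply Out_cvar; auto.
  - apply (proj2 Hs (b) (TEx a)). apply in_or_app; simpl; auto.
Qed.

Lemma arr_ctx : forall G1 G2 a a1 a2 A1 A2, a1 <> a2 ->
  fresh a1 (G1 ++ CEx a :: G2) [A1; A2] -> fresh a2 (G1 ++ CEx a :: G2) [A1; A2] ->
  okctx (G1 ++ CEx a :: G2) ->
  Out (G1 ++ CEx a :: G2) (G1 ++ CEx a2 :: CEx a1 :: CSolved a (TArr (TEx a1) (TEx a2)) :: G2).
Proof.
  intros G1 G2 a a1 a2 A1 A2 Hne Hf1 Hf2 HG.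
  destruct (fresh2 _ _ _ _ Hf1) as [Hn1 _]. destruct (fresh2 _ _ _ _ Hf2) as [Hn2 _].
  assert (Ha : ~ In a (dom G1)).
  { apply okctx_app in HG; destruct HG as [_ [[H _] _]]; apply H; simpl; auto. }
  assert (Hain : In a (names_ctx (G1 ++ CEx a :: G2))).
  { eapply In_names; [apply in_or_app; simpl; auto| simpl; auto]. }
  assert (HG1 : forall x, In x (dom G1) -> In x (names_ctx (G1 ++ CEx a :: G2))).
  { intros x Hx; apply dom_names; rewrite dom_app; apply in_or_app; auto. }
  assert (HG2 : forall x, In x (dom G2) -> In x (names_ctx (G1 ++ CEx a :: G2))).
  { intros x Hx; apply dom_names; rewrite dom_app, dom_cons; apply in_or_app; right; apply in_or_app; auto. }
  assert (O : Out (G1 ++ [CEx a] ++ G2)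
     (G1 ++ [CEx a2; CEx a1; CSolved a (TArr (TEx a1) (TEx a2))] ++ G2)).
  { apply Out_repl; [exact HG| |reflexivity|reflexivity| | |].
    - cbn [okc_from]. unfold entry_ok. rewrite !dom_app. simpl.
      split; [split; [|exact I]|split; [split; [|exact I]|split; [split|exact I]]].
      + intros x [Hx|[]]; subst; intro H; apply Hn2; auto.
      + intros x [Hx|[]]; subst; rewrite in_app_iff; simpl; intros [H|[H|[]]];
          [apply Hn1; auto| congruence].
      + intros x [Hx|[]]; subst; rewrite !in_app_iff; simpl; intros [[H|[H|[]]]|[H|[]]];
          [apply Ha; auto| apply Hn2; rewrite H; auto| apply Hn1; rewrite H; auto].
      + split; [repeat constructor|split].
        * intros z; rewrite !in_app_iff; simpl; intuition.
        * intros y Hy; simpl in Hy; contradiction.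
    - apply incl_cons; [simpl; auto|intros z []].
    - simpl; intros x [H|[H|[H|[]]]] H2; subst; intro H3.
      + apply Hn2; auto.
      + apply Hn1; auto.
      + apply H2; auto.
    - intros x t' [H|[]]; discriminate. }
  exact O.
Qed.

Lemma main_lemma :
  (forall G A B D, asub G A B D -> Pa G A B D) /\
  (forall G a A D, inst_l G a A D -> Pl G a A D) /\
  (forall G A a D, inst_r G A a D -> Pr G A a D).
Proof.
  apply asub_mut; unfold Pa, Pl, Pr.
  -
    intros G a Hin HG _ _. split; [apply Out_refl; auto|]. intros s Hs; simpl.
    constructor; apply declf_cvar; auto.
  - intros G HG _ _; split; [apply Out_refl; auto|]; intros; constructor.
  - intros G a Hin HG _ _; split; [apply Out_refl; auto|]; intros s Hs; simpl.
    eapply sig_refl; eauto.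
  -
    intros G T D A1 A2 B1 B2 _ IH1 _ IH2 HG HA HB.
    simpl in HA, HB. apply incl_app_l in HA; destruct HA as [HA1 HA2].
    apply incl_app_l in HB; destruct HB as [HB1 HB2].
    destruct (IH1 HG HB1 HA1) as [O1 S1].
    assert (HT := proj1 O1).
    assert (Hsol : forall x t, In (CSolved x t) T -> incl (evars_typ t) (dom T))
      by (intros x t H; eapply okctx_solved; eauto).
    destruct (IH2 HT (ctx_apply_evars T A2 (dom T) Hsol (fun z Hz => Out_dom G T z O1 (HA2 z Hz)))
                     (ctx_apply_evars T B2 (dom T) Hsol (fun z Hz => Out_dom G T z O1 (HB2 z Hz))))
      as [O2 S2].
    split; [eapply Out_trans; eauto|]. intros s Hs. cbn [sapp]. constructor.
    + apply S1. eapply valid_back; eauto.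
    + specialize (S2 s Hs). assert (HvT := valid_back s T D O2 Hs).
      rewrite !sapp_ctx_apply in S2 by apply (proj2 HvT).
      rewrite (declf_eq T G) in S2 by apply (proj1 (proj2 O1)). exact S2.
  -
    intros G A B D Th a Hf _ IH HG HA HB.
    destruct (fresh2 _ _ _ _ Hf) as [Hn [HnA HnB]].
    destruct IH as [O S].
    + apply okctx_mark; auto.
    + intros z Hz; apply evars_open in Hz; rewrite dom_app; apply in_or_app.
      destruct Hz as [Hz|Hz]; [left; apply HA; auto|right; simpl in Hz |- *; tauto].
    + apply incl_snoc; auto.
    + destruct (drop_suffix G [CMark a; CEx a] D (CMark a) Th a O eq_refl (or_intror eq_refl) Hn)
        as [OG Hdisj].
      split; auto. intros s Hs.
      destruct (extend (CMark a :: Th) D s (proj1 O) Hs) as [s' [Hs' Hag]].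
      specialize (S s' Hs'). rewrite declf_app in S. change (declf [CMark a; CEx a]) with (@nil entry) in S.
      rewrite app_nil_r in S. unfold open in S. rewrite sapp_open in S by (intros; apply (proj1 Hs')).
      change (sapp s' (TEx a)) with (s' a) in S.
      rewrite (sapp_agree s' s A), (sapp_agree s' s B) in S
        by (intros z Hz; apply Hag; apply Hdisj; auto).
      change (sapp s (TAll A)) with (TAll (sapp s A)).
      apply ds_allL with (s' a); [apply (proj1 Hs')| |exact S].
      eapply sig_wf; eauto. intros y; apply hv_suffix with (1 := O).
      intros z [H|[H|[]]]; discriminate.
  -
    intros G A B D Th a Hf _ IH HG HA HB.
    destruct (fresh2 _ _ _ _ Hf) as [Hn [HnA HnB]].
    destruct IH as [O S].
    + apply okctx_var; auto.
    + apply incl_snoc; auto.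
    + intros z Hz; apply evars_open in Hz; rewrite dom_app; apply in_or_app.
      destruct Hz as [Hz|Hz]; [left; apply HB; auto|simpl in Hz; contradiction].
    + destruct (drop_suffix G [CVar a] D (CVar a) Th a O eq_refl (or_introl eq_refl) Hn)
        as [OG Hdisj].
      split; auto. intros s Hs.
      destruct (extend (CVar a :: Th) D s (proj1 O) Hs) as [s' [Hs' Hag]].
      specialize (S s' Hs'). rewrite declf_app in S. change (declf [CVar a]) with [CVar a] in S.
      unfold open in S. rewrite sapp_open in S by (intros; apply (proj1 Hs')).
      change (sapp s' (TFVar a)) with (TFVar a) in S.
      rewrite (sapp_agree s' s A), (sapp_agree s' s B) in S
        by (intros z Hz; apply Hag; apply Hdisj; auto).
      change (sapp s (TAll B)) with (TAll (sapp s B)).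
      assert (HV : forall y, In (CVar y) D -> In (CVar y) G) by (intros y; apply Out_cvar; auto).
      apply ds_allR with a.
      * intro H; apply Hn; apply names_declf; auto.
      * eapply fresh_sapp; eauto.
      * eapply fresh_sapp; eauto.
      * exact S.
  -
    intros G a A D Hin _ _ IH HG HA HB. destruct (IH HG HB) as [O S].
    split; auto.
  - intros G a A D Hin _ _ IH HG HA HB. destruct (IH HG HA) as [O S].
    split; auto.
  -
    intros G1 G2 a t Hm Hw HG HA. destruct (solve_case G1 G2 a t Hm Hw HG) as [O S].
    split; auto. intros s Hs; destruct (S s Hs) as [H1 H2]. rewrite <- H2; auto.
  - intros G1 G2 G3 a b HG HA. destruct (reach_case G1 G2 G3 a b HG) as [O S].
    split; auto. intros s Hs; destruct (S s Hs) as [H1 H2]. simpl; rewrite H2; auto.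
  -
    intros G1 G2 a a1 a2 A1 A2 Th D Hne Hf1 Hf2 _ IH1 _ IH2 HG HA.
    simpl in HA. apply incl_app_l in HA; destruct HA as [HA1 HA2].
    assert (O1 := arr_ctx G1 G2 a a1 a2 A1 A2 Hne Hf1 Hf2 HG).
    destruct (IH1 (proj1 O1) (fun z Hz => Out_dom _ _ z O1 (HA1 z Hz))) as [O2 S2].
    assert (O12 := Out_trans _ _ _ O1 O2).
    assert (HT := proj1 O12).
    assert (Hsol : forall x t, In (CSolved x t) Th -> incl (evars_typ t) (dom Th))
      by (intros x t H; eapply okctx_solved; eauto).
    destruct (IH2 HT (ctx_apply_evars Th A2 (dom Th) Hsol (fun z Hz => Out_dom _ _ z O12 (HA2 z Hz))))
      as [O3 S3].
    split; [eapply Out_trans; eauto|]. intros s Hs.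
    assert (HvT := valid_back s Th D O3 Hs).
    assert (Hsa : s a = sapp s (TArr (TEx a1) (TEx a2))).
    { apply (proj2 Hs). apply (proj2 (proj2 (proj2 O3))). apply (proj2 (proj2 (proj2 O2))).
      apply in_or_app; simpl; auto. }
    rewrite Hsa. cbn [sapp]. constructor.
    + specialize (S2 s HvT). rewrite (declf_eq _ (G1 ++ CEx a :: G2)) in S2 by apply (proj1 (proj2 O1)).
      exact S2.
    + specialize (S3 s Hs). rewrite sapp_ctx_apply in S3 by apply (proj2 HvT).
      rewrite (declf_eq _ (G1 ++ CEx a :: G2)) in S3 by apply (proj1 (proj2 O12)). exact S3.
  -
    intros G a B b D D' Hin Hf _ IH HG HA.
    destruct (fresh1 _ _ _ Hf) as [Hn HnB].
    destruct IH as [O S].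
    + apply okctx_var; auto.
    + intros z Hz; apply evars_open in Hz; rewrite dom_app; apply in_or_app.
      destruct Hz as [Hz|Hz]; [left; apply HA; auto|simpl in Hz; contradiction].
    + destruct (drop_suffix G [CVar b] D (CVar b) D' b O eq_refl (or_introl eq_refl) Hn)
        as [OG Hdisj].
      split; auto. intros s Hs.
      destruct (extend (CVar b :: D') D s (proj1 O) Hs) as [s' [Hs' Hag]].
      specialize (S s' Hs'). rewrite declf_app in S. change (declf [CVar b]) with [CVar b] in S.
      unfold open in S. rewrite sapp_open in S by (intros; apply (proj1 Hs')).
      change (sapp s' (TFVar b)) with (TFVar b) in S.
      rewrite (sapp_agree s' s B) in S by (intros z Hz; apply Hag; apply Hdisj; auto).
      rewrite (Hag a) in S by (apply Hdisj; eapply cex_dom; eauto).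
      change (sapp s (TAll B)) with (TAll (sapp s B)).
      assert (HV : forall y, In (CVar y) D -> In (CVar y) G) by (intros y; apply Out_cvar; auto).
      apply ds_allR with b.
      * intro H; apply Hn; apply names_declf; auto.
      * eapply sig_names; eauto.
      * eapply fresh_sapp; eauto.
      * exact S.
  -
    intros G1 G2 a t Hm Hw HG HA. destruct (solve_case G1 G2 a t Hm Hw HG) as [O S].
    split; auto. intros s Hs; destruct (S s Hs) as [H1 H2]. rewrite <- H2; auto.
  - intros G1 G2 G3 a b HG HA. destruct (reach_case G1 G2 G3 a b HG) as [O S].
    split; auto. intros s Hs; destruct (S s Hs) as [H1 H2]. simpl; rewrite H2; auto.
  -
    intros G1 G2 a a1 a2 A1 A2 Th D Hne Hf1 Hf2 _ IH1 _ IH2 HG HA.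
    simpl in HA. apply incl_app_l in HA; destruct HA as [HA1 HA2].
    assert (O1 := arr_ctx G1 G2 a a1 a2 A1 A2 Hne Hf1 Hf2 HG).
    destruct (IH1 (proj1 O1) (fun z Hz => Out_dom _ _ z O1 (HA1 z Hz))) as [O2 S2].
    assert (O12 := Out_trans _ _ _ O1 O2).
    assert (HT := proj1 O12).
    assert (Hsol : forall x t, In (CSolved x t) Th -> incl (evars_typ t) (dom Th))
      by (intros x t H; eapply okctx_solved; eauto).
    destruct (IH2 HT (ctx_apply_evars Th A2 (dom Th) Hsol (fun z Hz => Out_dom _ _ z O12 (HA2 z Hz))))
      as [O3 S3].
    split; [eapply Out_trans; eauto|]. intros s Hs.
    assert (HvT := valid_back s Th D O3 Hs).
    assert (Hsa : s a = sapp s (TArr (TEx a1) (TEx a2))).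
    { apply (proj2 Hs). apply (proj2 (proj2 (proj2 O3))). apply (proj2 (proj2 (proj2 O2))).
      apply in_or_app; simpl; auto. }
    rewrite Hsa. cbn [sapp]. constructor.
    + specialize (S2 s HvT). rewrite (declf_eq _ (G1 ++ CEx a :: G2)) in S2 by apply (proj1 (proj2 O1)).
      exact S2.
    + specialize (S3 s Hs). rewrite sapp_ctx_apply in S3 by apply (proj2 HvT).
      rewrite (declf_eq _ (G1 ++ CEx a :: G2)) in S3 by apply (proj1 (proj2 O12)). exact S3.
  -
    intros G a B b D D' Hin Hf _ IH HG HA.
    destruct (fresh1 _ _ _ Hf) as [Hn HnB].
    destruct IH as [O S].
    + apply okctx_mark; auto.
    + intros z Hz; apply evars_open in Hz; rewrite dom_app; apply in_or_app.
      destruct Hz as [Hz|Hz]; [left; apply HA; auto|right; simpl in Hz |- *; tauto].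
    + destruct (drop_suffix G [CMark b; CEx b] D (CMark b) D' b O eq_refl (or_intror eq_refl) Hn)
        as [OG Hdisj].
      split; auto. intros s Hs.
      destruct (extend (CMark b :: D') D s (proj1 O) Hs) as [s' [Hs' Hag]].
      specialize (S s' Hs'). rewrite declf_app in S. change (declf [CMark b; CEx b]) with (@nil entry) in S.
      rewrite app_nil_r in S. unfold open in S. rewrite sapp_open in S by (intros; apply (proj1 Hs')).
      change (sapp s' (TEx b)) with (s' b) in S.
      rewrite (sapp_agree s' s B) in S by (intros z Hz; apply Hag; apply Hdisj; auto).
      rewrite (Hag a) in S by (apply Hdisj; eapply cex_dom; eauto).
      change (sapp s (TAll B)) with (TAll (sapp s B)).
      apply ds_allL with (s' b); [apply (proj1 Hs')| |exact S].
      eapply sig_wf; eauto. intros y; apply hv_suffix with (1 := O).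
      intros z [H|[H|[]]]; discriminate.
Qed.

Lemma bound_list : forall l : list nat, exists a, forall x, In x l -> x < a.
Proof.
  induction l as [|y l [a Ha]]; [exists 0; intros x []|].
  exists (S (Nat.max y a)); intros x [H|H]; [subst; lia|specialize (Ha x H); lia].
Qed.

Lemma wf_decl_evars : forall G A, wf_typ G A -> decl_ctx G -> evars_typ A = [].
Proof.
  intros G A H; induction H; intros Hd; simpl; auto.
  - exfalso. unfold decl_ctx in Hd; rewrite Forall_forall in Hd.
    destruct H as [H|[t H]]; apply Hd in H; simpl in H; auto.
  - rewrite IHwf_typ1, IHwf_typ2; auto.
  - destruct (bound_list (names_ctx G)) as [b Hb].
    assert (Hn : ~ In b (names_ctx G)) by (intro Hi; specialize (Hb b Hi); lia).
    specialize (H0 b Hn). assert (Hd' : decl_ctx (G ++ [CVar b])).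
    { unfold decl_ctx; apply Forall_app; split; auto; repeat constructor. }
    specialize (H0 Hd'). destruct (evars_typ A) as [|z l] eqn:E; auto.
    exfalso. assert (Hz : In z (evars_typ A)) by (rewrite E; simpl; auto).
    apply (evars_open_incl A 0 (TFVar b)) in Hz. unfold open in H0. rewrite H0 in Hz; contradiction.
Qed.

Lemma decl_okctx : forall G, wf_ctx G -> decl_ctx G -> okctx G.
Proof.
  intros G H; induction H; intros Hd; [exact I|..]; unfold decl_ctx in Hd; apply Forall_app in Hd;
    destruct Hd as [Hd1 Hd2]; inversion Hd2; subst; simpl in *; try contradiction;
    apply okctx_app; split; auto; cbn [okc_from]; split; auto; split; auto;
    intros y [Hy|[]]; subst; auto.
Qed.

Lemma declf_decl : forall G, decl_ctx G -> declf G = G.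
Proof.
  induction G as [|e G IH]; intros Hd; [reflexivity|]. inversion Hd; subst.
  change (declf (e :: G)) with (declf_entry e ++ declf G). rewrite IH; auto.
  destruct e; simpl in *; try contradiction; reflexivity.
Qed.

Theorem mainTheorem7 :
  forall (Psi : ctx) (A B : typ) (Delta : ctx),
    decl_ctx Psi -> wf_ctx Psi ->
    wf_typ Psi A -> wf_typ Psi B ->
    asub Psi A B Delta ->
    dsub Psi A B.
Proof.
  intros Psi A B Delta Hd Hw HA HB Hs.
  assert (EA := wf_decl_evars _ _ HA Hd). assert (EB := wf_decl_evars _ _ HB Hd).
  destruct ((proj1 main_lemma) _ _ _ _ Hs (decl_okctx _ Hw Hd)) as [O S].
  - rewrite EA; intros z [].
  - rewrite EB; intros z [].
  - assert (Hv0 : valid (fun _ => TUnit) []).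
    { split; [intros x; repeat split; [constructor|intros y []]| intros x t []]. }
    destruct (extend Delta [] (fun _ => TUnit) (proj1 O) Hv0) as [s [Hs' _]].
    specialize (S s Hs'). rewrite !sapp_closed in S by auto.
    rewrite declf_decl in S; auto.
Qed.
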